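(* Let $\mathbb{X}$ be a discrete group with identity $\circ$, let $\mu$ be a finitely supported probability measure on $\mathbb{X}$ satisfying (A1) $\mu(xzx^{-1})=\mu(z)$ for all $x,z\in\mathbb{X}$ and (A2) $\mu(z)=\mu(z^{-1})$ for all $z\in\mathbb{X}$, and let $(X_t)_{t\ge0}$ be the continuous-time Markov chain on $\mathbb{X}$ started at $X_0=\circ$ with generator $(Lf)(x)=\sum_{z\in\mathbb{X}}\mu(z)(f(xz)-f(x))$. Fix a function $f\colon\mathbb{X}\to\mathbb{R}$ and a time $t\ge 0$. If $\mathbb{E}[\Gamma f(X_t)]<\infty$, then $\mathbb{E}[f^2(X_t)]<\infty$ and $$\mathrm{Var}[f(X_t)]\le 2t\,\mathbb{E}[\Gamma f(X_t)].$$
   Context: Here $\Gamma f(x):=\frac12\sum_{z\in\mathbb{X}}\mu(z)\left(f(xz)-f(x)\right)^2$ (the carré du champ $\Gamma(f)=\frac12[L(f^2)-2fLf]$ of $L$, extended to arbitrary, possibly unbounded, $f$ by this formula). *)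

(* Defs.v *)
From HB Require Import structures.
From mathcomp Require Import all_boot all_order all_algebra.
From mathcomp Require Import all_classical all_reals all_analysis.
From Stdlib Require List.
Set Implicit Arguments. Unset Strict Implicit. Unset Printing Implicit Defensive.
Import Order.TTheory GRing.Theory Num.Theory.
Local Open Scope ring_scope.

Record is_group (G : Type) (mul : G -> G -> G) (one : G) (inv : G -> G) : Prop := {
  grp_assoc : forall x y z, mul x (mul y z) = mul (mul x y) z;
  grp_mul1 : forall x, mul one x = x;
  grp_mul1r : forall x, mul x one = x;
  grp_mulV : forall x, mul (inv x) x = one;
  grp_mulVr : forall x, mul x (inv x) = one }.

Section Chain.
Variables (R : realType) (G : Type) (mul : G -> G -> G) (one : G) (mu : G -> R)
  (s : seq G) (* a finite list containing the support of mu *).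

Definition Gamma (f : G -> R) (x : G) : R :=
  2^-1 * \sum_(z <- s) mu z * (f (mul x z) - f x) ^+ 2.

Fixpoint Kpow (n : nat) (g : G -> \bar R) (x : G) : \bar R :=
  match n with
  | O => g x
  | n'.+1 => (\sum_(z <- s) (mu z)%:E * Kpow n' g (mul x z))%E
  end.

(* Markov semigroup P_t = e^{tL} = sum_n e^{-t} t^n/n! K^n  (L = K - I), applied
   to a nonnegative function: this is E_x[g(X_t)] in [0, +oo]. *)
Definition Pt (t : R) (g : G -> \bar R) (x : G) : \bar R :=
  (\sum_(0 <= n <oo) ((expR (- t) * t ^+ n / (n`!)%:R)%:E * Kpow n g x))%E.

Definition Enn (t : R) (g : G -> R) : \bar R := Pt t (fun x => (g x)%:E) one.

Definition Esgn (t : R) (f : G -> R) : R :=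
  fine (Enn t (fun x => Num.max (f x) 0)) - fine (Enn t (fun x => Num.max (- f x) 0)).

Definition Var (t : R) (f : G -> R) : R :=
  fine (Enn t (fun x => (f x - Esgn t f) ^+ 2)).

End Chain.

(* Main.v *)
Require Import Defs.
From mathcomp Require Import all_boot all_order all_algebra.
From mathcomp Require Import all_classical all_reals all_analysis.
From Stdlib Require List.
From mathcomp Require Import ring lra.
From Stdlib Require Permutation.
Import Order.TTheory GRing.Theory Num.Theory.
Import numFieldNormedType.Exports.
Local Open Scope ring_scope.

Section ListLemmas.
Variables (R : realType) (G : Type).

Lemma sum_perm (F : G -> R) (l1 l2 : seq G) :
  Permutation.Permutation l1 l2 -> \sum_(z <- l1) F z = \sum_(z <- l2) F z.
Proof.
elim => [|x l l' _ IH|x y l|l l' l'' _ IH1 _ IH2].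
- by [].
- by rewrite !big_cons IH.
- by rewrite !big_cons addrCA.
- by rewrite IH1 IH2.
Qed.

Lemma In_filter (p : pred G) x (l : seq G) :
  List.In x (seq.filter p l) <-> List.In x l /\ p x.
Proof.
elim: l => [|y l IH] /=; first by split=> // -[].
case Hp: (p y) => /=; split.
- by case=> [<-|/IH [H1 H2]]; [split; [left|]|split; [right|]].
- by case=> [[->|H1] H2]; [left|right; apply/IH].
- by move/IH=> [H1 H2]; split; [right|].
- by case=> [[Hy|H1] H2]; [subst; rewrite Hp in H2|apply/IH].
Qed.

Lemma NoDup_filter (p : pred G) (l : seq G) :
  List.NoDup l -> List.NoDup (seq.filter p l).
Proof.
elim: l => [|y l IH] /=; first by [].
move=> H; inversion H; subst.
case: (p y); last exact: IH.
constructor; last exact: IH.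
by move/In_filter=> [].
Qed.

Lemma In_map (f : G -> G) x (l : seq G) :
  List.In x l -> List.In (f x) (map f l).
Proof. elim: l => [|y l IH] //= [->|H]; [by left|right; exact: IH]. Qed.

Lemma In_map_inj (f : G -> G) x (l : seq G) :
  (forall a b, f a = f b -> a = b) ->
  List.In (f x) (map f l) -> List.In x l.
Proof.
move=> inj; elim: l => [|y l IH] //= [H|H]; [left; exact: inj|right; exact: IH].
Qed.

Lemma NoDup_map (f : G -> G) (l : seq G) :
  (forall a b, f a = f b -> a = b) -> List.NoDup l -> List.NoDup (map f l).
Proof.
move=> inj; elim: l => [|y l IH] /=; first by constructor.
move=> H; inversion H; subst; constructor; last exact: IH.
move=> Hin; apply: H2; exact: (In_map_inj _ _ _ inj Hin).
Qed.

Lemma sum_filter0 (F : G -> R) (l : seq G) :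
  \sum_(z <- seq.filter (fun z => F z != 0) l) F z = \sum_(z <- l) F z.
Proof.
rewrite big_filter [RHS](bigID (fun z => F z != 0)) /=.
by rewrite [X in _ = _ + X]big1 ?addr0 // => i /negPn/eqP.
Qed.

Lemma sum_support (F : G -> R) (l1 l2 : seq G) :
  List.NoDup l1 -> List.NoDup l2 ->
  (forall v, F v != 0 -> List.In v l1 /\ List.In v l2) ->
  \sum_(z <- l1) F z = \sum_(z <- l2) F z.
Proof.
move=> n1 n2 H; rewrite -sum_filter0 -[RHS]sum_filter0; apply: sum_perm.
apply: Permutation.NoDup_Permutation; try exact: NoDup_filter.
move=> x; split => /In_filter [Hx Fx]; apply/In_filter; split => //;
  by have [] := H x Fx.
Qed.
End ListLemmas.


Section Finite.
Variable R : realType.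

Lemma L_sym (F : nat -> nat -> R) N :
  (forall i j, F i j = F j i) -> (forall i, F i i = 0) ->
  \sum_(0 <= i < N) \sum_(0 <= j < N) F i j = 2 * \sum_(0 <= j < N) \sum_(0 <= i < j) F i j.
Proof.
move=> Fs F0; elim: N => [|N IH]; first by rewrite !big_geq // mulr0.
rewrite (big_nat_recr N 0 (fun i => \sum_(0 <= j < N.+1) F i j)) //=.
rewrite (big_nat_recr N 0 (fun j => \sum_(0 <= i < j) F i j)) //=.
rewrite (eq_bigr (fun i => \sum_(0 <= j < N) F i j + F i N)); last first.
  by move=> i _; rewrite big_nat_recr.
rewrite big_split /= IH big_nat_recr //= F0.
rewrite [\sum_(0 <= j < N) F N j](eq_bigr (fun j => F j N)); last by move=> j _; rewrite Fs.
ring.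
Qed.

Lemma L_cs (b : nat -> R) i m :
  (b (i + m)%N - b i) ^+ 2 <= m%:R * \sum_(i <= k < i + m) (b k.+1 - b k) ^+ 2.
Proof.
elim: m => [|m IH]; first by rewrite addn0 subrr expr2 mulr0 mul0r.
rewrite addnS big_nat_recr ?leq_addr //=.
case: m IH => [|m] IH.
  by rewrite !addn0 big_geq // add0r mul1r.
set X := b (i + m.+1)%N - b i in IH *.
set d := b (i + m.+1).+1 - b (i + m.+1)%N.
set S := \sum_(i <= k < i + m.+1) (b k.+1 - b k) ^+ 2 in IH *.
have -> : b (i + m.+1).+1 - b i = X + d by rewrite /X /d; ring.
have S0 : 0 <= S by apply: sumr_ge0 => k _; apply: sqr_ge0.
rewrite -natr1.
set M := m.+1%:R in IH *.
have M0 : 0 < M by rewrite /M ltr0n.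
have h1 : 0 <= M * (M * S - X ^+ 2) by apply: mulr_ge0; [exact: ltW | lra].
have h2 : 0 <= (X - M * d) ^+ 2 by apply: sqr_ge0.
have key : 0 <= M * ((M + 1) * (S + d ^+ 2) - (X + d) ^+ 2).
  have -> : M * ((M + 1) * (S + d ^+ 2) - (X + d) ^+ 2) =
    M * (M * S - X ^+ 2) + (M * S - X ^+ 2) + (X - M * d) ^+ 2 by ring.
  lra.
nra.
Qed.

Lemma L_tri1 (c e : nat -> R) N :
  \sum_(0 <= i < N) c i * \sum_(i <= k < N) e k =
  \sum_(0 <= k < N) e k * \sum_(0 <= i < k.+1) c i.
Proof.
elim: N => [|N IH]; first by rewrite !big_geq.
rewrite (big_nat_recr N 0 (fun i => c i * \sum_(i <= k < N.+1) e k)) //=.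
rewrite (big_nat_recr N 0 (fun k => e k * \sum_(0 <= i < k.+1) c i)) //=.
rewrite (eq_big_nat _ _ (F2 := fun i => c i * \sum_(i <= k < N) e k + c i * e N)); last first.
  move=> i /andP [_ hi]; rewrite big_nat_recr ?mulrDr //.
  exact: ltnW.
rewrite big_split /= IH big_nat1 -big_distrl /= (big_nat_recr N 0 c) //=.
ring.
Qed.

Definition W (c : nat -> nat -> R) k N :=
  \sum_(k.+1 <= j < N) \sum_(0 <= i < k.+1) c i j.

Lemma L_tri (c : nat -> nat -> R) (e : nat -> R) N :
  \sum_(0 <= j < N) \sum_(0 <= i < j) c i j * \sum_(i <= k < j) e k =
  \sum_(0 <= k < N) e k * W c k N.
Proof.
elim: N => [|N IH]; first by rewrite !big_geq.
rewrite (big_nat_recr N 0 (fun j => \sum_(0 <= i < j) c i j * \sum_(i <= k < j) e k)) //=.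
rewrite IH L_tri1.
rewrite (big_nat_recr N 0 (fun k => e k * W c k N.+1)) //=.
rewrite [W c N N.+1]/W [\sum_(N.+1 <= j < N.+1) _]big_geq // mulr0 addr0.
rewrite -big_split /=; apply: eq_big_nat => k /andP [_ hk].
by rewrite [W c k N.+1]/W (big_nat_recr N k.+1) // mulrDr.
Qed.

End Finite.
Arguments W {R}.
Arguments L_cs {R}.
Arguments L_tri {R}.
Arguments L_tri1 {R}.
Arguments L_sym {R}.

Section Poisson.
Variables (R : realType) (t : R).
Hypothesis ht : 0 <= t.

Definition pp (n : nat) : R := expR (- t) * t ^+ n / (n`!)%:R.

Lemma pp_ge0 n : 0 <= pp n.
Proof.
rewrite /pp; apply: mulr_ge0; first apply: mulr_ge0.
- exact: expR_ge0.
- exact: exprn_ge0.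
- by rewrite invr_ge0.
Qed.

Lemma pp0 : pp 0 = expR (- t).
Proof. by rewrite /pp expr0 mulr1 fact0 invr1 mulr1. Qed.

Lemma ppS n : n.+1%:R * pp n.+1 = t * pp n.
Proof.
rewrite /pp factS natrM exprS.
have h1 : (n`!)%:R != 0 :> R by rewrite pnatr_eq0 -lt0n fact_gt0.
have h2 : (n.+1)%:R != 0 :> R by rewrite pnatr_eq0.
field.
by rewrite h1 nat1r h2.
Qed.

Lemma pp_series : cvgn (series pp) /\ limn (series pp) = 1.
Proof.
have E : pp = expR (- t) *: exp_coeff t.
  by apply/funext => n; rewrite /pp /exp_coeff /= -mulrA.
have c := is_cvg_series_exp_coeff t.
rewrite E; split; first exact: is_cvg_seriesZ.
rewrite lim_seriesZ //; change (expR (- t) * expR t = 1); by rewrite -expRD addNr expR0.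
Qed.

Lemma nnes_fin (u : nat -> R) : (forall n, 0 <= u n) -> cvgn (series u) ->
  (\sum_(n <oo) (u n)%:E = (limn (series u))%:E)%E.
Proof.
move=> u0 cu; rewrite -EFin_lim //; apply: congr_lim; apply/funext => n /=.
by rewrite sumEFin.
Qed.

Lemma pp_esum : (\sum_(n <oo) (pp n)%:E = 1%:E)%E.
Proof.
have [c l] := pp_series.
by rewrite nnes_fin // ?l //; apply: pp_ge0.
Qed.

Lemma pp_partial N : \sum_(0 <= k < N) pp k <= 1.
Proof.
rewrite -lee_fin -sumEFin -pp_esum.
apply: nneseries_lim_ge => n _ _; rewrite lee_fin; exact: pp_ge0.
Qed.

Lemma sum_ipp k : \sum_(0 <= i < k.+1) i%:R * pp i = t * \sum_(0 <= i < k) pp i.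
Proof.
elim: k => [|k IH]; first by rewrite big_nat1 big_geq // mul0r mulr0.
rewrite big_nat_recr //= IH ppS (big_nat_recr k 0 pp) //=.
ring.
Qed.

Definition cw i j := pp i * pp j * (j%:R - i%:R).

Lemma L_W k m : W cw k (k.+1 + m) =
  t * (pp k * \sum_(0 <= j < k.+1 + m) pp j - \sum_(0 <= i < k.+1) pp i * pp (k + m)%N).
Proof.
elim: m => [|m IH].
  rewrite /W addn0 big_geq // addn0 -big_distrl /=.
  ring.
rewrite /W addnS big_nat_recr ?leq_addr //= -/(W cw k (k.+1 + m)) IH.
rewrite (big_nat_recr (k.+1 + m) 0 pp) //=.
rewrite /cw.
have E1 : \sum_(0 <= i < k.+1) pp i * pp (k.+1 + m)%N * ((k.+1 + m)%:R - i%:R) =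
  (k.+1 + m)%:R * pp (k.+1 + m)%N * \sum_(0 <= i < k.+1) pp i
  - pp (k.+1 + m)%N * \sum_(0 <= i < k.+1) i%:R * pp i.
  rewrite !mulr_sumr -sumrB; apply: eq_bigr => i _; ring.
rewrite E1 sum_ipp.
have -> : (k.+1 + m)%:R * pp (k.+1 + m)%N = t * pp (k + m)%N.
  by rewrite addSn ppS.
rewrite addnS addSn -!big_distrl /=.
rewrite !(big_nat_recr k 0 pp) //=.
ring.
Qed.

Lemma W_le k N : (k < N)%N -> W cw k N <= t * pp k.
Proof.
move=> kN; rewrite -(subnKC kN) L_W.
set S := \sum_(0 <= j < _) pp j.
have S1 : S <= 1 by apply: pp_partial.
have F0 : 0 <= \sum_(0 <= i < k.+1) pp i * pp (k + (N - k.+1))%N.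
  by apply: sumr_ge0 => i _; apply: mulr_ge0; apply: pp_ge0.
have p0 := pp_ge0 k.
have tp : 0 <= t * pp k by apply: mulr_ge0.
have h1 : 0 <= t * pp k * (1 - S) by apply: mulr_ge0; lra.
have h2 : 0 <= t * \sum_(0 <= i < k.+1) pp i * pp (k + (N - k.+1))%N by apply: mulr_ge0.
nra.
Qed.

Lemma FP (b : nat -> R) N :
  \sum_(0 <= i < N) \sum_(0 <= j < N) pp i * pp j * (b i - b j) ^+ 2 <=
  2 * t * \sum_(0 <= k < N) pp k * (b k.+1 - b k) ^+ 2.
Proof.
rewrite L_sym; last 2 first.
- by move=> i j; ring.
- by move=> i; rewrite subrr expr2 !mulr0.
set e := fun k => (b k.+1 - b k) ^+ 2.
have step : \sum_(0 <= j < N) \sum_(0 <= i < j) pp i * pp j * (b i - b j) ^+ 2 <=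
    \sum_(0 <= j < N) \sum_(0 <= i < j) cw i j * \sum_(i <= k < j) e k.
  apply: ler_sum => j _; apply: ler_sum_nat => i /andP [_ ij].
  rewrite /cw -[X in _ <= X]mulrA; apply: ler_wpM2l; first by apply: mulr_ge0; apply: pp_ge0.
  have := L_cs b i (j - i).
  rewrite subnKC ?(ltnW ij) // natrB ?(ltnW ij) //.
  by have -> : (b i - b j) ^+ 2 = (b j - b i) ^+ 2 by ring.
apply: (le_trans (ler_wpM2l _ step)) => //.
rewrite L_tri.
have e0 : forall k, 0 <= e k by move=> k; apply: sqr_ge0.
apply: (@le_trans _ _ (2 * \sum_(0 <= k < N) e k * (t * pp k))).
  apply: ler_wpM2l => //; apply: ler_sum_nat => k /andP [_ kN].
  by apply: ler_wpM2l => //; apply: W_le.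
rewrite -mulrA; apply: ler_wpM2l => //; rewrite mulr_sumr; apply: ler_sum => k _.
rewrite /e /=; lra.
Qed.

Lemma sum_nat_mono (u : nat -> R) m n : (forall k, 0 <= u k) -> (m <= n)%N ->
  \sum_(0 <= i < m) u i <= \sum_(0 <= i < n) u i.
Proof.
move=> u0 mn; rewrite (big_cat_nat (leq0n m) mn) /= lerDl.
by apply: sumr_ge0 => i _.
Qed.

Lemma Qbound (b : nat -> R) :
  (\sum_(i <oo) \sum_(j <oo) (pp i * pp j * (b i - b j) ^+ 2)%:E <=
   (2 * t)%:E * \sum_(k <oo) (pp k * (b k.+1 - b k) ^+ 2)%:E)%E.
Proof.
set X := (_ * _)%E.
set F := fun i j => pp i * pp j * (b i - b j) ^+ 2.
have F0 : forall i j, 0 <= F i j.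
  by move=> i j; apply: mulr_ge0; [apply: mulr_ge0; apply: pp_ge0 | apply: sqr_ge0].
have e0 : forall k, 0 <= pp k * (b k.+1 - b k) ^+ 2.
  by move=> k; apply: mulr_ge0; [apply: pp_ge0 | apply: sqr_ge0].
have fin : forall N, ((\sum_(0 <= j < N) \sum_(0 <= i < N) F i j)%:E <= X)%E.
  move=> N; rewrite exchange_big /=.
  apply: (@le_trans _ _ (2 * t * \sum_(0 <= k < N) pp k * (b k.+1 - b k) ^+ 2)%:E).
    by rewrite lee_fin; apply: FP.
  rewrite EFinM /X; apply: lee_wpmul2l; first by rewrite lee_fin; apply: mulr_ge0.
  rewrite -sumEFin; apply: nneseries_lim_ge => n _ _; rewrite lee_fin; exact: e0.
have fin2 : forall N1 N2, (\sum_(0 <= j < N2) \sum_(0 <= i < N1) (F i j)%:E <= X)%E.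
  move=> N1 N2.
  rewrite (eq_bigr (fun j => (\sum_(0 <= i < N1) F i j)%:E)); last by move=> j _; rewrite sumEFin.
  rewrite sumEFin.
  apply: le_trans (fin (maxn N1 N2)); rewrite lee_fin.
  apply: (@le_trans _ _ (\sum_(0 <= j < N2) \sum_(0 <= i < maxn N1 N2) F i j)).
    apply: ler_sum => j _; apply: sum_nat_mono => //; exact: leq_maxl.
  apply: sum_nat_mono; last exact: leq_maxr.
  by move=> k; apply: sumr_ge0 => i _.
apply: lime_le.
  by apply: is_cvg_nneseries => n _ _; apply: nneseries_ge0 => j _ _; rewrite lee_fin; apply: F0.
apply: nearW => N1.
rewrite -nneseries_sum_nat; last by move=> i j; rewrite lee_fin; apply: F0.
apply: lime_le.
  by apply: is_cvg_nneseries => n _ _; apply: sume_ge0 => j _; rewrite lee_fin; apply: F0.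
by apply: nearW => N2; apply: fin2.
Qed.

End Poisson.
Arguments pp {R}.
Arguments pp_ge0 {R t}.
Arguments ppS {R}.
Arguments pp0 {R}.
Arguments pp_series {R}.
Arguments nnes_fin {R}.
Arguments Qbound {R t}.

Section SerH.
Variable R : realType.

Lemma serD (u v w : nat -> R) : cvgn (series u) -> cvgn (series v) ->
  (forall n, w n = u n + v n) ->
  cvgn (series w) /\ limn (series w) = limn (series u) + limn (series v).
Proof.
move=> cu cv e; have -> : w = u + v by apply/funext => n; rewrite e.
by split; [exact: is_cvg_seriesD | exact: lim_seriesD].
Qed.

Lemma serZ (u w : nat -> R) k : cvgn (series u) -> (forall n, w n = k * u n) ->
  cvgn (series w) /\ limn (series w) = k * limn (series u).
Proof.
move=> cu e; have -> : w = k *: u by apply/funext => n; rewrite e.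
by split; [exact: is_cvg_seriesZ | exact: lim_seriesZ].
Qed.

Lemma serL3 (u1 u2 u3 w : nat -> R) k1 k2 k3 :
  cvgn (series u1) -> cvgn (series u2) -> cvgn (series u3) ->
  (forall n, w n = k1 * u1 n + k2 * u2 n + k3 * u3 n) ->
  cvgn (series w) /\ limn (series w) =
    k1 * limn (series u1) + k2 * limn (series u2) + k3 * limn (series u3).
Proof.
move=> c1 c2 c3 e.
have [d1 l1] := serZ u1 (fun n => k1 * u1 n) k1 c1 (fun n => erefl).
have [d2 l2] := serZ u2 (fun n => k2 * u2 n) k2 c2 (fun n => erefl).
have [d3 l3] := serZ u3 (fun n => k3 * u3 n) k3 c3 (fun n => erefl).
have [d12 l12] := serD _ _ (fun n => k1 * u1 n + k2 * u2 n) d1 d2 (fun n => erefl).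
have [d l] := serD _ _ w d12 d3 e.
by split => //; rewrite l l12 l1 l2 l3.
Qed.

Lemma serle (u v : nat -> R) : (forall n, 0 <= u n) -> (forall n, u n <= v n) ->
  cvgn (series v) -> cvgn (series u) /\ limn (series u) <= limn (series v).
Proof.
move=> u0 uv cv.
have cu : cvgn (series u).
  apply: (series_le_cvg u0 _ uv cv) => n; exact: le_trans (u0 n) (uv n).
by split => //; apply: lim_series_le.
Qed.

Lemma nn_cvg (u : nat -> R) : (forall n, 0 <= u n) ->
  (\sum_(n <oo) (u n)%:E < +oo)%E ->
  cvgn (series u) /\ (\sum_(n <oo) (u n)%:E = (limn (series u))%:E)%E.
Proof.
move=> u0 fin; have cu := nnseries_is_cvg u0 fin.
by split => //; apply: nnes_fin.
Qed.

Lemma lim_ge0 (u : nat -> R) : (forall n, 0 <= u n) -> cvgn (series u) ->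
  0 <= limn (series u).
Proof.
move=> u0 cu; rewrite -lee_fin -nnes_fin //.
by apply: nneseries_ge0 => n _ _; rewrite lee_fin.
Qed.

Lemma eshift (u : nat -> R) : (forall n, 0 <= u n) -> u 0%N = 0 ->
  (\sum_(n <oo) (u n)%:E = \sum_(n <oo) (u n.+1)%:E)%E.
Proof.
move=> u0 e0.
rewrite (nneseries_split 0 1); last by move=> k _; rewrite lee_fin.
rewrite add0n big_nat1 e0 add0e -nneseries_addn; last by move=> k; rewrite lee_fin.
by apply: eq_eseriesr => n _; rewrite addn1.
Qed.

End SerH.
Arguments serD {R}.
Arguments serZ {R}.
Arguments serL3 {R}.
Arguments serle {R}.
Arguments nn_cvg {R}.
Arguments lim_ge0 {R}.
Arguments eshift {R}.

Section Walk.
Variables (R : realType) (G : Type) (mul : G -> G -> G) (one : G) (inv : G -> G).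
Hypothesis hG : is_group mul one inv.
Variables (mu : G -> R) (s : seq G).
Hypothesis mu_ge0 : forall z, 0 <= mu z.
Hypothesis s_uniq : List.NoDup s.
Hypothesis mu_supp : forall z, mu z <> 0 -> List.In z s.
Hypothesis mu_sum1 : \sum_(z <- s) mu z = 1.
Hypothesis A1 : forall x z, mu (mul (mul x z) (inv x)) = mu z.

Definition Kr (g : G -> R) x := \sum_(z <- s) mu z * g (mul x z).

Fixpoint Kn n (g : G -> R) x : R :=
  match n with O => g x | n'.+1 => \sum_(z <- s) mu z * Kn n' g (mul x z) end.

Lemma KnS n g x : Kn n.+1 g x = Kr (Kn n g) x.
Proof. by []. Qed.

Lemma Kr_ext g h x : (forall y, g y = h y) -> Kr g x = Kr h x.
Proof. by move=> e; apply: eq_bigr => z _; rewrite e. Qed.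

Lemma Kn_ext n g h x : (forall y, g y = h y) -> Kn n g x = Kn n h x.
Proof.
move=> e; elim: n x => [|n IH] x /=; first exact: e.
by apply: eq_bigr => z _; rewrite IH.
Qed.

Lemma Kr_lin a b e g h x :
  Kr (fun y => a * g y + b * h y + e) x = a * Kr g x + b * Kr h x + e.
Proof.
rewrite /Kr !mulr_sumr.
rewrite [in RHS](_ : e = \sum_(z <- s) mu z * e); last by rewrite -big_distrl /= mu_sum1 mul1r.
rewrite -!big_split /=.
by apply: eq_bigr => z _; ring.
Qed.

Lemma Kn_lin n a b e g h x :
  Kn n (fun y => a * g y + b * h y + e) x = a * Kn n g x + b * Kn n h x + e.
Proof.
elim: n x => [|n IH] x //=.
rewrite (eq_bigr (fun z => mu z * (a * Kn n g (mul x z) + b * Kn n h (mul x z) + e)));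
  last by move=> z _; rewrite IH.
exact: (Kr_lin a b e (Kn n g) (Kn n h) x).
Qed.

Lemma Kn_cst n c x : Kn n (fun _ => c) x = c.
Proof.
have -> : Kn n (fun _ => c) x =
  Kn n (fun y => 0 * (fun _ : G => 0) y + 0 * (fun _ : G => 0) y + c) x.
  by apply: Kn_ext => y; ring.
by rewrite Kn_lin; ring.
Qed.

Lemma Kr_le g h x : (forall y, g y <= h y) -> Kr g x <= Kr h x.
Proof. by move=> le; apply: ler_sum => z _; apply: ler_wpM2l. Qed.

Lemma Kn_le n g h x : (forall y, g y <= h y) -> Kn n g x <= Kn n h x.
Proof.
move=> le; elim: n x => [|n IH] x /=; first exact: le.
by apply: ler_sum => z _; apply: ler_wpM2l.
Qed.

Lemma Kn_add n m g x : Kn (n + m) g x = Kn n (Kn m g) x.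
Proof.
elim: n x => [|n IH] x //=.
by apply: eq_bigr => z _; rewrite IH.
Qed.

Lemma KnSr n g x : Kn n.+1 g x = Kn n (Kr g) x.
Proof. by rewrite -addn1 Kn_add. Qed.

Lemma jensen_s (h : G -> R) :
  (\sum_(w <- s) mu w * h w) ^+ 2 <= \sum_(w <- s) mu w * h w ^+ 2.
Proof.
set c := \sum_(w <- s) mu w * h w.
have H0 : 0 <= \sum_(w <- s) mu w * (h w - c) ^+ 2.
  by apply: sumr_ge0 => w _; apply: mulr_ge0 => //; apply: sqr_ge0.
have E : \sum_(w <- s) mu w * (h w - c) ^+ 2 =
  \sum_(w <- s) mu w * h w ^+ 2 - 2 * c * c + c ^+ 2 * \sum_(w <- s) mu w.
  rewrite (eq_bigr (fun w => mu w * h w ^+ 2 - 2 * c * (mu w * h w) + c ^+ 2 * mu w));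
    last by move=> w _; ring.
  by rewrite big_split /= sumrB -!mulr_sumr.
rewrite E mu_sum1 in H0; nra.
Qed.

Lemma Kr_jensen g x : (Kr g x) ^+ 2 <= Kr (fun y => g y ^+ 2) x.
Proof. exact: jensen_s. Qed.

Lemma Kn_jensen n g x : (Kn n g x) ^+ 2 <= Kn n (fun y => g y ^+ 2) x.
Proof.
elim: n x => [|n IH] x //=.
apply: (le_trans (Kr_jensen (Kn n g) x)).
by apply: ler_sum => z _; apply: ler_wpM2l.
Qed.

Lemma Kn_ge0 n g x : (forall y, 0 <= g y) -> 0 <= Kn n g x.
Proof. move=> H; rewrite -(Kn_cst n 0 x); exact: Kn_le. Qed.


Let gA := grp_assoc hG.
Let g1l := grp_mul1 hG.
Let g1r := grp_mul1r hG.
Let gVl := grp_mulV hG.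
Let gVr := grp_mulVr hG.

Lemma GammaE g x : Gamma mul mu s g x = 2^-1 * Kr (fun y => (g y - g x) ^+ 2) x.
Proof. by []. Qed.

Lemma two_Gamma g x : 2 * Gamma mul mu s g x = Kr (fun y => (g y - g x) ^+ 2) x.
Proof. by rewrite GammaE mulrA divff ?mul1r // pnatr_eq0. Qed.

Lemma Gamma_ge0 g x : 0 <= Gamma mul mu s g x.
Proof.
rewrite GammaE; apply: mulr_ge0; first by rewrite invr_ge0.
by apply: sumr_ge0 => z _; apply: mulr_ge0 => //; apply: sqr_ge0.
Qed.

Lemma gam_eq g x : Kr (fun y => g y ^+ 2) x - (Kr g x) ^+ 2 =
  2 * Gamma mul mu s g x - (Kr g x - g x) ^+ 2.
Proof.
rewrite two_Gamma.
rewrite (Kr_ext (fun y => (g y - g x) ^+ 2) (fun y => (- 2 * g x) * g y + 1 * (g y ^+ 2) + g x ^+ 2) x);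
  last by move=> y /=; ring.
rewrite Kr_lin; ring.
Qed.

Lemma L2_le g x : (Kr g x - g x) ^+ 2 <= 2 * Gamma mul mu s g x.
Proof.
have -> : Kr g x - g x = Kr (fun y => g y - g x) x.
  rewrite (Kr_ext (fun y => g y - g x) (fun y => 1 * g y + 0 * g y + (- g x)) x);
    last by move=> y /=; ring.
  rewrite Kr_lin; ring.
rewrite two_Gamma; exact: Kr_jensen.
Qed.

Lemma reindex (phi : G -> G) (H : G -> R) :
  (forall w, mu (phi w) = mu w) -> (forall a b, phi a = phi b -> a = b) ->
  (forall v, exists w, phi w = v) ->
  \sum_(w <- s) mu w * H (phi w) = \sum_(w <- s) mu w * H w.
Proof.
move=> Hmu inj sur.
rewrite (eq_bigr (fun w => mu (phi w) * H (phi w))); last by move=> w _; rewrite Hmu.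
rewrite -(big_map phi xpredT (fun v => mu v * H v)).
apply: sum_support; first exact: NoDup_map.
  exact: s_uniq.
move=> v Fv.
have muv : mu v <> 0 by move=> e; rewrite e mul0r eqxx in Fv.
split; last exact: mu_supp.
have [w Hw] := sur v; subst v.
apply: In_map; apply: mu_supp => e; apply: muv; by rewrite Hmu.
Qed.

Lemma Kr_shift g x z :
  Kr g (mul x z) = \sum_(w <- s) mu w * g (mul (mul x w) z).
Proof.
rewrite /Kr.
rewrite -(reindex (fun w => mul (mul z w) (inv z)) (fun w => g (mul (mul x w) z))).
- apply: eq_bigr => w _; congr (_ * g _).
  by rewrite -!gA !gVl !g1r.
- by move=> w; rewrite A1.
- move=> a b E.
  have := f_equal (fun u => mul (inv z) (mul u z)) E => /=.
  by rewrite -!gA !gVl !g1r !gA !gVl !g1l.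
- move=> v; exists (mul (mul (inv z) v) z).
  by rewrite -!gA !gVr !g1r !gA !gVr !g1l.
Qed.

Lemma Gamma_Kr g x : Gamma mul mu s (Kr g) x <= Kr (Gamma mul mu s g) x.
Proof.
rewrite GammaE /Kr.
have step : forall z, (Kr g (mul x z) - Kr g x) ^+ 2 <=
    \sum_(w <- s) mu w * (g (mul (mul x w) z) - g (mul x w)) ^+ 2.
  move=> z; rewrite Kr_shift /Kr -sumrB.
  rewrite (eq_bigr (fun w => mu w * (g (mul (mul x w) z) - g (mul x w))));
    last by move=> w _; rewrite mulrBr.
  exact: jensen_s.
apply: (le_trans (ler_wpM2l _ (ler_sum _ (fun z _ => ler_wpM2l (mu_ge0 z) (step z))))).
  by rewrite invr_ge0.
rewrite mulr_sumr (eq_bigr (fun i => \sum_(w <- s) 2^-1 * (mu i * (mu w * (g (mul (mul x w) i) - g (mul x w)) ^+ 2)))); last by move=> i _; rewrite !mulr_sumr.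
rewrite exchange_big /= le_eqVlt; apply/orP; left; apply/eqP.
apply: eq_bigr => w _; rewrite GammaE /Kr !mulr_sumr; apply: eq_bigr => z _; ring.
Qed.

Lemma Gamma_Kn n g x : Gamma mul mu s (Kn n g) x <= Kn n (Gamma mul mu s g) x.
Proof.
elim: n x => [|n IH] x //=.
apply: (le_trans (Gamma_Kr (Kn n g) x)).
by apply: ler_sum => z _; apply: ler_wpM2l.
Qed.

Lemma KnZ n a g x : Kn n (fun y => a * g y) x = a * Kn n g x.
Proof.
rewrite (Kn_ext n (fun y => a * g y) (fun y => a * g y + 0 * g y + 0) x);
  last by move=> y /=; ring.
by rewrite Kn_lin; ring.
Qed.

Lemma Kn1 h x : Kn 1 h x = Kr h x.
Proof. by []. Qed.

Lemma var_n n g x :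
  Kn n.+1 (fun y => g y ^+ 2) x - (Kn n.+1 g x) ^+ 2 <=
  n.+1%:R * (2 * Kn n (Gamma mul mu s g) x - (Kn n (fun y => Kr g y - g y) x) ^+ 2).
Proof.
elim: n g => [|n IH] g.
  by rewrite !Kn1 /= mul1r gam_eq.
set A := Kn n.+1 (Gamma mul mu s g) x.
set D := Kn n.+1 (fun y => Kr g y - g y) x.
have EK : Kn n.+2 (fun y => g y ^+ 2) x =
    Kn n.+1 (fun y => Kr g y ^+ 2) x + (2 * A - Kn n.+1 (fun y => (Kr g y - g y) ^+ 2) x).
  rewrite KnSr.
  rewrite (Kn_ext n.+1 (Kr (fun y => g y ^+ 2))
    (fun y => 1 * (Kr g y ^+ 2) + 1 * (2 * Gamma mul mu s g y - (Kr g y - g y) ^+ 2) + 0) x);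
    last by move=> y /=; have := gam_eq g y; lra.
  rewrite Kn_lin.
  rewrite (Kn_ext n.+1 (fun y => 2 * Gamma mul mu s g y - (Kr g y - g y) ^+ 2)
    (fun y => 2 * Gamma mul mu s g y + (-1) * (Kr g y - g y) ^+ 2 + 0) x);
    last by move=> y /=; ring.
  rewrite Kn_lin /A; ring.
have EK2 : Kn n.+2 g x = Kn n.+1 (Kr g) x by rewrite KnSr.
have h1 := IH (Kr g).
have h2 : Kn n (Gamma mul mu s (Kr g)) x <= A.
  rewrite /A KnSr; apply: Kn_le => y; exact: Gamma_Kr.
have h3 : Kn n (fun y => Kr (Kr g) y - Kr g y) x = D.
  rewrite /D KnSr; apply: Kn_ext => y.
  rewrite (Kr_ext (fun u => Kr g u - g u) (fun u => 1 * Kr g u + (-1) * g u + 0) y);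
    last by move=> u /=; ring.
  rewrite Kr_lin; ring.
have h4 : D ^+ 2 <= Kn n.+1 (fun y => (Kr g y - g y) ^+ 2) x by exact: Kn_jensen.
rewrite h3 in h1.
rewrite EK EK2.
have N0 : 0 <= n.+1%:R :> R by [].
have -> : n.+2%:R = n.+1%:R + 1 :> R by rewrite -natr1.
nra.
Qed.

Lemma d2_le n g x :
  (Kn n (fun y => Kr g y - g y) x) ^+ 2 <= 2 * Kn n (Gamma mul mu s g) x.
Proof.
apply: (le_trans (Kn_jensen _ _ _)).
rewrite -KnZ; apply: Kn_le => y; exact: L2_le.
Qed.

Lemma d_eq n g x : Kn n (fun y => Kr g y - g y) x = Kn n.+1 g x - Kn n g x.
Proof.
rewrite KnSr (Kn_ext n (fun y => Kr g y - g y) (fun y => 1 * Kr g y + (-1) * g y + 0) x);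
  last by move=> y /=; ring.
by rewrite Kn_lin; ring.
Qed.

Lemma sq_dev n g c x : Kn n (fun y => (g y - c) ^+ 2) x =
  (Kn n (fun y => g y ^+ 2) x - (Kn n g x) ^+ 2) + (Kn n g x - c) ^+ 2.
Proof.
rewrite (Kn_ext n (fun y => (g y - c) ^+ 2) (fun y => 1 * (g y ^+ 2) + (- 2 * c) * g y + c ^+ 2) x);
  last by move=> y /=; ring.
by rewrite Kn_lin; ring.
Qed.

Lemma Kn_pm n f x :
  Kn n (fun y => Num.max (f y) 0) x - Kn n (fun y => Num.max (- f y) 0) x = Kn n f x.
Proof.
have -> : Kn n f x = Kn n (fun y => 1 * Num.max (f y) 0 + (-1) * Num.max (- f y) 0 + 0) x.
  apply: Kn_ext => y /=.
  have [hy|hy] := lerP 0 (f y).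
    rewrite max_r; [ring | by rewrite oppr_le0].
  rewrite max_l; [ring | by rewrite oppr_ge0 ltW].
by rewrite Kn_lin; ring.
Qed.

Lemma Kn_max_le n f x :
  Kn n (fun y => Num.max (f y) 0) x <= Kn n (fun y => 1 * (f y ^+ 2) + 0 * (f y ^+ 2) + 1) x.
Proof.
apply: Kn_le => y /=.
have [hy|hy] := lerP 0 (f y).
  nra.
nra.
Qed.

Lemma Kpow_Kn n g x :
  Kpow mul mu s n (fun y => (g y)%:E) x = (Kn n g x)%:E.
Proof.
elim: n x => //= n IH x.
rewrite (eq_bigr (fun z => (mu z * Kn n g (mul x z))%:E)); last by move=> z _; rewrite IH.
by rewrite sumEFin.
Qed.

Lemma fineE' (x : R) : fine x%:E = x.
Proof. by []. Qed.

Lemma main (f : G -> R) (t : R) (ht : 0 <= t) :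
  (Enn mul one mu s t (Gamma mul mu s f) < +oo)%E ->
  (Enn mul one mu s t (fun x => (f x ^+ 2)%R) < +oo)%E /\
  Var mul one mu s t f <= 2 * t * fine (Enn mul one mu s t (Gamma mul mu s f)).
Proof.
move=> HG.
pose p := pp t.
have EnnE : forall h, Enn mul one mu s t h = (\sum_(n <oo) (p n * Kn n h one)%:E)%E.
  by move=> h; rewrite /Enn /Pt; apply: eq_eseriesr => n _; rewrite Kpow_Kn -EFinM.
have p0 : forall n, 0 <= p n := pp_ge0 ht.
pose a n := Kn n (fun y => f y ^+ 2) one.
pose b n := Kn n f one.
pose c n := Kn n (Gamma mul mu s f) one.
pose d n := b n.+1 - b n.
pose V n := a n - b n ^+ 2.
have c0 : forall n, 0 <= c n by move=> n; apply: Kn_ge0 => y; apply: Gamma_ge0.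
have V0 : V 0%N = 0 by rewrite /V /a /b /= subrr.
have V_ge0 : forall n, 0 <= V n by move=> n; rewrite subr_ge0; apply: Kn_jensen.
have dE : forall n, Kn n (fun y => Kr f y - f y) one = d n by move=> n; rewrite d_eq.
have VS : forall n, V n.+1 <= n.+1%:R * (2 * c n - d n ^+ 2).
  by move=> n; rewrite -dE; apply: var_n.
have d2 : forall n, d n ^+ 2 <= 2 * c n by move=> n; rewrite -dE; apply: d2_le.
pose pc n := p n * c n.
have pc0 : forall n, 0 <= pc n by move=> n; apply: mulr_ge0.
have [cG EGE] : cvgn (series pc) /\ (\sum_(n <oo) (pc n)%:E = (limn (series pc))%:E)%E.
  by apply: nn_cvg => //; rewrite -EnnE.
set CG := limn (series pc).
pose r n := t * p n * (2 * c n - d n ^+ 2).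
pose q n := p n * d n ^+ 2.
have r0 : forall n, 0 <= r n.
  by move=> n; apply: mulr_ge0; [apply: mulr_ge0 | rewrite subr_ge0].
have q0 : forall n, 0 <= q n by move=> n; apply: mulr_ge0 => //; apply: sqr_ge0.
have [c2G _] := serZ pc (fun n => (2 * t) * pc n) (2 * t) cG (fun n => erefl).
have rle : forall n, r n <= 2 * t * pc n.
  move=> n; rewrite /r /pc.
  have := mulr_ge0 (mulr_ge0 ht (p0 n)) (sqr_ge0 (d n)); lra.
have qle : forall n, q n <= 2 * pc n.
  move=> n; rewrite /q /pc; have := ler_wpM2l (p0 n) (d2 n); lra.
have [cr rleL] := serle r (fun n => (2 * t) * pc n) r0 rle c2G.
have [c2G' _] := serZ pc (fun n => 2 * pc n) 2 cG (fun n => erefl).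
have [cq _] := serle q (fun n => 2 * pc n) q0 qle c2G'.
set LR := limn (series r).
set LQ := limn (series q).
have RQ : LR + t * LQ = 2 * t * CG.
  have [_ l1] := serL3 r q pc (fun n => r n + t * q n) 1 t 0 cr cq cG
    (fun n => ltac:(cbv beta; ring)).
  have [_ l2] := serZ pc (fun n => r n + t * q n) (2 * t) cG
    (fun n => ltac:(rewrite /r /q /pc; ring)).
  by move: l1; rewrite l2 /LR /LQ => ->; ring.
pose pV n := p n * V n.
have pV0 : forall n, 0 <= pV n by move=> n; apply: mulr_ge0.
have SV : (\sum_(n <oo) (pV n)%:E <= LR%:E)%E.
  rewrite (eshift pV) //; last by rewrite /pV V0 mulr0.
  rewrite /LR -nnes_fin //.
  apply: lee_nneseries => [n _ _|n _]; first by rewrite lee_fin.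
  rewrite lee_fin /pV /r.
  apply: (@le_trans _ _ (p n.+1 * (n.+1%:R * (2 * c n - d n ^+ 2)))).
    exact: ler_wpM2l.
  have := ppS t n; rewrite /p => e.
  rewrite mulrA (mulrC (pp t n.+1)) e; lra.
have [cV EV] := nn_cvg pV pV0 (le_lt_trans SV (ltry _)).
set LV := limn (series pV).
have LVle : LV <= LR by rewrite -lee_fin -EV.
have QB := Qbound ht b.
rewrite -/p in QB.
have EQ : (\sum_(k <oo) (p k * (b k.+1 - b k) ^+ 2)%:E = LQ%:E)%E by apply: nnes_fin.
rewrite EQ -EFinM in QB.
pose u0 j := p 0%N * p j * (b 0%N - b j) ^+ 2.
have u00 : forall j, 0 <= u0 j.
  by move=> j; apply: mulr_ge0; [apply: mulr_ge0 | apply: sqr_ge0].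
have F0 : forall i j, (0 <= (p i * p j * (b i - b j) ^+ 2)%:E)%E.
  by move=> i j; rewrite lee_fin; apply: mulr_ge0; [apply: mulr_ge0 | apply: sqr_ge0].
have U0 : (\sum_(j <oo) (u0 j)%:E <= (2 * t * LQ)%:E)%E.
  apply: le_trans QB.
  have := @nneseries_lim_ge _ (fun i => \sum_(j <oo) (p i * p j * (b i - b j) ^+ 2)%:E)%E
    xpredT 0%N 1%N.
  rewrite big_nat1; apply => n _ _; apply: nneseries_ge0 => j _ _; exact: F0.
have [cu0 _] := nn_cvg u0 u00 (le_lt_trans U0 (ltry _)).
have pp0' : 0 < p 0%N by rewrite /p pp0 expR_gt0.
pose w j := p j * (b j - b 0%N) ^+ 2.
have [cw _] := serZ u0 w (p 0%N)^-1 cu0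
  (fun j => ltac:(rewrite /w /u0; field; exact: lt0r_neq0)).
have [cP lP] := pp_series t.
rewrite -/p in cP lP.
pose pb2 n := p n * b n ^+ 2.
have [cv _] := serL3 w p p (fun n => 2 * w n + (2 * b 0%N ^+ 2) * p n) 2 (2 * b 0%N ^+ 2) 0
  cw cP cP (fun n => ltac:(cbv beta; ring)).
have [cpb2 _] := serle pb2 (fun n => 2 * w n + (2 * b 0%N ^+ 2) * p n)
  (fun n => ltac:(apply: mulr_ge0 => //; apply: sqr_ge0))
  (fun n => ltac:(rewrite /pb2 /w; have := mulr_ge0 (p0 n) (sqr_ge0 (b n - 2 * b 0%N)); nra)) cv.
set S2 := limn (series pb2).
have [cpa _] := serD pV pb2 (fun n => p n * a n) cV cpb2
  (fun n => ltac:(rewrite /pV /pb2 /V; ring)).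
have Ef2 : Enn mul one mu s t (fun x => f x ^+ 2) = (limn (series (fun n => p n * a n)))%:E.
  rewrite EnnE; apply: nnes_fin => // n; apply: mulr_ge0 => //.
  by apply: Kn_ge0 => y; apply: sqr_ge0.
split; first by rewrite Ef2 ltry.
pose bp n := Kn n (fun y => Num.max (f y) 0) one.
pose bm n := Kn n (fun y => Num.max (- f y) 0) one.
have [cpa1 _] := serD (fun n => p n * a n) p (fun n => p n * a n + p n) cpa cP (fun n => erefl).
have bp0 : forall n, 0 <= p n * bp n.
  by move=> n; apply: mulr_ge0 => //; apply: Kn_ge0 => y; rewrite le_max lexx orbT.
have bm0 : forall n, 0 <= p n * bm n.
  by move=> n; apply: mulr_ge0 => //; apply: Kn_ge0 => y; rewrite le_max lexx orbT.
have bple : forall n, p n * bp n <= p n * a n + p n.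
  move=> n; rewrite -[X in _ <= _ + X]mulr1 -mulrDr; apply: ler_wpM2l => //.
  apply: le_trans (Kn_max_le n f one) _; rewrite Kn_lin /a; lra.
have bmle : forall n, p n * bm n <= p n * a n + p n.
  move=> n; rewrite -[X in _ <= _ + X]mulr1 -mulrDr; apply: ler_wpM2l => //.
  apply: le_trans (Kn_max_le n (fun y => - f y) one) _.
  rewrite Kn_lin /a.
  rewrite (Kn_ext n (fun y => (- f y) ^+ 2) (fun y => f y ^+ 2) one); last by move=> y; rewrite sqrrN.
  lra.
have [cbp _] := serle (fun n => p n * bp n) _ bp0 bple cpa1.
have [cbm _] := serle (fun n => p n * bm n) _ bm0 bmle cpa1.
pose pb n := p n * b n.
have [cpb lpb] := serL3 (fun n => p n * bp n) (fun n => p n * bm n) p pb 1 (-1) 0 cbp cbm cP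
  (fun n => ltac:(rewrite /pb /b -(Kn_pm n f one) /bp /bm; ring)).
set m := limn (series pb).
have Em : Esgn mul one mu s t f = m.
  rewrite /Esgn !EnnE (nnes_fin (fun n => p n * bp n)) // (nnes_fin (fun n => p n * bm n)) //.
  by rewrite !fineE' /m lpb; ring.
have Vc : forall cc, cvgn (series (fun n => p n * (b n - cc) ^+ 2)) /\
    limn (series (fun n => p n * (b n - cc) ^+ 2)) = S2 - 2 * cc * m + cc ^+ 2.
  move=> cc.
  have [h1 h2] := serL3 pb2 pb p (fun n => p n * (b n - cc) ^+ 2) 1 (- 2 * cc) (cc ^+ 2)
    cpb2 cpb cP (fun n => ltac:(rewrite /pb2 /pb; ring)).
  by split => //; rewrite h2 lP -/S2 -/m; ring.
have [cVm lVm] := Vc m.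
have S2m : 0 <= S2 - m ^+ 2.
  have := lim_ge0 (fun n => p n * (b n - m) ^+ 2) (fun n => ltac:(apply: mulr_ge0 => //; apply: sqr_ge0)) cVm.
  by rewrite lVm; lra.
have EVar : Var mul one mu s t f = LV + (S2 - m ^+ 2).
  rewrite /Var Em EnnE.
  have [h1 h2] := serD pV (fun n => p n * (b n - m) ^+ 2)
    (fun n => p n * Kn n (fun x => (f x - m) ^+ 2) one) cV cVm
    (fun n => ltac:(cbv beta; rewrite sq_dev /pV /V /a /b; ring)).
  rewrite nnes_fin //; last first.
    by move=> n; apply: mulr_ge0 => //; apply: Kn_ge0 => y; apply: sqr_ge0.
  by rewrite fineE' h2 lVm -/LV; ring.
have Qin : forall i, (\sum_(j <oo) (p i * p j * (b i - b j) ^+ 2)%:E =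
    (p i * (S2 - 2 * b i * m + b i ^+ 2))%:E)%E.
  move=> i; have [h1 h2] := Vc (b i).
  have [h3 h4] := serZ (fun j => p j * (b j - b i) ^+ 2)
    (fun j => p i * p j * (b i - b j) ^+ 2) (p i) h1 (fun j => ltac:(cbv beta; ring)).
  rewrite nnes_fin //; last by move=> j; have := F0 i j; rewrite lee_fin.
  by rewrite h4 h2.
have Qval : (\sum_(i <oo) \sum_(j <oo) (p i * p j * (b i - b j) ^+ 2)%:E =
    (S2 - 2 * m * m + S2)%:E)%E.
  rewrite (eq_eseriesr (fun i _ => Qin i)).
  have [h1 h2] := serL3 p pb pb2 (fun i => p i * (S2 - 2 * b i * m + b i ^+ 2)) S2 (- 2 * m) 1
    cP cpb cpb2 (fun n => ltac:(rewrite /pb /pb2; ring)).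
  rewrite nnes_fin //; last first.
    move=> i; apply: mulr_ge0 => //.
    have -> : S2 - 2 * b i * m + b i ^+ 2 = (b i - m) ^+ 2 + (S2 - m ^+ 2) by ring.
    by apply: addr_ge0 => //; apply: sqr_ge0.
  by rewrite h2 lP -/m -/S2; congr EFin; ring.
rewrite Qval lee_fin in QB.
have EnnG : Enn mul one mu s t (Gamma mul mu s f) = CG%:E by rewrite EnnE; exact: EGE.
rewrite EVar EnnG fineE'.
lra.
Qed.

End Walk.

Theorem corollary3 (R : realType) (G : Type) (mul : G -> G -> G) (one : G)
  (inv : G -> G) (hG : is_group mul one inv)
  (mu : G -> R) (s : seq G)
  (mu_ge0 : forall z, 0 <= mu z)
  (s_uniq : List.NoDup s)
  (mu_supp : forall z, mu z <> 0 -> List.In z s)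
  (mu_sum1 : \sum_(z <- s) mu z = 1)
  (A1 : forall x z, mu (mul (mul x z) (inv x)) = mu z)
  (A2 : forall z, mu (inv z) = mu z)
  (f : G -> R) (t : R) (ht : 0 <= t) :
  (Enn mul one mu s t (Gamma mul mu s f) < +oo)%E ->
  (Enn mul one mu s t (fun x => (f x ^+ 2)%R) < +oo)%E /\
  Var mul one mu s t f <= 2 * t * fine (Enn mul one mu s t (Gamma mul mu s f)).
Proof.
exact: (@main R G mul one inv hG mu s mu_ge0 s_uniq mu_supp mu_sum1 A1 f t ht).
Qed.
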